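(* Let $\sigma_0,\sigma_\epsilon>0$, $\theta_0\in\mathbb{R}$, prior $\Theta\sim N(\theta_0,\sigma_0^2)$, signal $X=\Theta+\epsilon$ with $\epsilon\sim\mathrm{Laplace}(0,\sigma_\epsilon)$ independent of $\Theta$, and let $\theta_1(x)=\mathbb{E}[\Theta\mid X=x]$. Then for large signals the shift is asymptotically constant: $\theta_1(x)-\theta_0\approx\operatorname{sgn}(x-\theta_0)\frac{\sigma_0^2}{\sigma_\epsilon}$, i.e. $$\lim_{x\to+\infty}(\theta_1(x)-\theta_0)=\frac{\sigma_0^2}{\sigma_\epsilon},\qquad \lim_{x\to-\infty}(\theta_1(x)-\theta_0)=-\frac{\sigma_0^2}{\sigma_\epsilon}.$$
   Context: $\mathrm{Laplace}(\mu,s)$ has density $t\mapsto\frac{1}{2s}e^{-|t-\mu|/s}$. The posterior mean is $\theta_1(x)=\frac{\int\theta f_\Theta(\theta)l_\epsilon(x-\theta)d\theta}{\int f_\Theta(\theta)l_\epsilon(x-\theta)d\theta}$. *)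

(* Defs.v *)
From HB Require Import structures.
From mathcomp Require Import all_boot all_order all_algebra.
From mathcomp Require Import all_classical all_reals all_analysis.
Set Implicit Arguments. Unset Strict Implicit. Unset Printing Implicit Defensive.
Import Order.TTheory GRing.Theory Num.Theory.
Import numFieldNormedType.Exports.
Local Open Scope classical_set_scope.
Local Open Scope ring_scope.

Definition laplace_pdf {R : realType} (mu s t : R) : R :=
  (s *+ 2)^-1 * expR (- `|t - mu| / s).

(* Posterior mean of Theta ~ N(theta0, sigma0^2) given X = Theta + eps = x,
   eps ~ Laplace(0, sigmae) independent of Theta:
   theta1(x) = (\int theta f_Theta(theta) l(x - theta)) / (\int f_Theta(theta) l(x - theta)),
   integrals are Lebesgue integrals over R. *)
Definition posterior_mean {R : realType} (theta0 sigma0 sigmae x : R) : R :=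
  (\int[lebesgue_measure]_(th in [set: R])
      (th * normal_pdf theta0 sigma0 th * laplace_pdf 0 sigmae (x - th)))
  / (\int[lebesgue_measure]_(th in [set: R])
      (normal_pdf theta0 sigma0 th * laplace_pdf 0 sigmae (x - th))).

(* Main.v *)
Require Import Defs.
From HB Require Import structures.
From mathcomp Require Import all_boot all_order all_algebra.
From mathcomp Require Import all_classical all_reals all_analysis.
From mathcomp Require Import ring lra.
Import Order.TTheory GRing.Theory Num.Theory.
Import numFieldNormedType.Exports.
Local Open Scope classical_set_scope.
Local Open Scope ring_scope.
Set Implicit Arguments. Unset Strict Implicit.

Lemma npdfE (R : realType) (m s t : R) : s != 0 ->
  normal_pdf m s t = normal_peak s * expR (- (t - m) ^+ 2 / (s ^+ 2 *+ 2)).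
Proof. by move=> s0; rewrite /normal_pdf (negbTE s0). Qed.

Lemma mgf_pt (R : realType) (m s l t : R) : s != 0 ->
  expR (l * t) * normal_pdf m s t =
  expR (l * m + l ^+ 2 * s ^+ 2 / 2) * normal_pdf (m + l * s ^+ 2) s t.
Proof.
move=> s0; rewrite !npdfE // mulrCA [RHS]mulrCA -!expRD; congr (_ * expR _).
have s20 : s ^+ 2 != 0 by rewrite expf_neq0.
field.
by [].
Qed.

Notation mu := (@lebesgue_measure _).

Ltac mfun := repeat first [ apply: measurable_realfun.measurable_funM | apply: measurable_realfun.measurable_funD
  | apply: measurable_realfun.measurable_funB | apply: measurable_realfun.measurable_funN | exact: measurable_cst
  | exact: measurable_id | exact: measurable_normal_pdf
  | (apply: measurableT_comp; [exact: measurable_realfun.measurable_expR| ])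
  | (apply: measurableT_comp; [exact: measurable_realfun.normr_measurable| ]) ].

Lemma int_mgf (R : realType) (m s l : R) : s != 0 ->
  mu.-integrable [set: R] (EFin \o (fun t => expR (l * t) * normal_pdf m s t)).
Proof.
move=> s0.
have := integrableZl measurableT (expR (l * m + l ^+ 2 * s ^+ 2 / 2))
  (@integrable_normal_pdf R (m + l * s ^+ 2) s).
apply: eq_integrable => //.
by move=> t _ /=; rewrite mgf_pt // EFinM.
Qed.

Lemma Rint_npdf (R : realType) (m s : R) :
  \int[mu]_t (normal_pdf m s t) = 1.
Proof. by rewrite /Rintegral integral_normal_pdf. Qed.

Lemma Rint_mgf (R : realType) (m s l : R) : s != 0 ->
  \int[mu]_t (expR (l * t) * normal_pdf m s t) = expR (l * m + l ^+ 2 * s ^+ 2 / 2).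
Proof.
move=> s0; under eq_Rintegral do rewrite mgf_pt //.
rewrite RintegralZl //; last exact: integrable_normal_pdf.
by rewrite Rint_npdf mulr1.
Qed.

Lemma dom_int (R : realType) (f g : R -> R) : measurable_fun [set: R] f ->
  (forall t, `|f t| <= g t) -> mu.-integrable [set: R] (EFin \o g) ->
  mu.-integrable [set: R] (EFin \o f).
Proof.
move=> mf fg ig; apply: le_integrable ig => //.
  exact/measurable_realfun.measurable_EFinP.
move=> t _ /=; rewrite lee_fin (le_trans (fg t)) //.
by rewrite ger0_norm // (le_trans _ (fg t)).
Qed.

Lemma test_m (R : realType) (m s b x : R) :
  measurable_fun [set: R] (fun t => t * normal_pdf m s t * expR (- (`|x - t| + b * (t - x)) / b)).
Proof. mfun. Qed.

Definition wf {R : realType} (b e x t : R) := expR (- (`|x - t| + e * (t - x)) / b).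
Definition Af {R : realType} (m s b e x : R) :=
  (b *+ 2)^-1 * expR (e * m / b + e ^+ 2 * s ^+ 2 / (b ^+ 2 *+ 2) - e * x / b).

Lemma P1 (R : realType) (m s b e x t : R) : s != 0 -> b != 0 ->
  normal_pdf m s t * laplace_pdf 0 b (x - t) =
  Af m s b e x * (normal_pdf (m + e * s ^+ 2 / b) s t * wf b e x t).
Proof.
move=> s0 b0; rewrite /laplace_pdf /Af /wf !npdfE // subr0.
set E1 := expR (- (t - m) ^+ 2 / _).
set E2 := expR (- `|x - t| / b).
set E3 := expR (_ - e * x / b).
set E4 := expR (- (t - _) ^+ 2 / _).
set E5 := expR (- (_ + _) / b).
have H : E1 * E2 = E3 * (E4 * E5).
  rewrite /E1 /E2 /E3 /E4 /E5 -!expRD; congr expR.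
  have s20 : s ^+ 2 != 0 by rewrite expf_neq0.
  set u := `|x - t|.
  field. by rewrite s0 b0.
transitivity (normal_peak s * (b *+ 2)^-1 * (E1 * E2)); first by ring.
rewrite H; ring.
Qed.

Lemma w_bound (R : realType) (b e x t : R) : e ^+ 2 = 1 -> 0 < b ->
  0 <= 1 - wf b e x t <= expR (- (e *+ 2 / b) * x) * expR ((e *+ 2 / b) * t).
Proof.
move=> e2 b0; rewrite /wf.
have ne : `|e| = 1.
  by apply/eqP; rewrite -(@eqrXn2 _ 2) ?normr_ge0 // real_normK ?num_real // e2 expr1n.
have key : `|x - t| = `|e * (t - x)| by rewrite normrM ne mul1r distrC.
rewrite -expRD key.
have [h|h] := leP (e * (t - x)) 0.
  by rewrite ler0_norm // addNr oppr0 mul0r expR0 subrr lexx expR_ge0.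
rewrite (ger0_norm (ltW h)).
have eb : 0 <= (e * (t - x)) *+ 2 / b by rewrite divr_ge0 ?mulrn_wge0 ?ltW.
apply/andP; split.
  rewrite subr_ge0 expR_le1 mulNr oppr_le0 divr_ge0 // ?ltW //. by rewrite addr_gt0.
apply: (@le_trans _ _ (1:R)).
  by rewrite lerBlDr lerDl expR_ge0.
have -> : - (e *+ 2 / b) * x + e *+ 2 / b * t = (e * (t - x)) *+ 2 / b.
  by rewrite -[e *+ 2]mulr_natr -[(e * (t - x)) *+ 2]mulr_natr; field; rewrite gt_eqF.
by rewrite -expR0 ler_expR.
Qed.


Lemma abs_le_exp (R : realType) (t : R) : `|t| <= expR (1 * t) + expR ((-1) * t).
Proof.
have h : `|t| <= expR `|t|.
  by rewrite (le_trans _ (expR_ge1Dx _)) // lerDr.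
rewrite mul1r mulN1r; have [t0|t0] := leP 0 t.
  by rewrite (le_trans h) // ger0_norm // lerDl expR_ge0.
by rewrite (le_trans h) // ltr0_norm // lerDr expR_ge0.
Qed.

Lemma intD (R : realType) (f g : R -> R) :
  mu.-integrable [set: R] (EFin \o f) -> mu.-integrable [set: R] (EFin \o g) ->
  mu.-integrable [set: R] (EFin \o (fun t => f t + g t)).
Proof.
move=> hf hg; have := integrableD measurableT hf hg.
by apply: eq_integrable => // t _ /=; rewrite EFinD.
Qed.

Lemma intB (R : realType) (f g : R -> R) :
  mu.-integrable [set: R] (EFin \o f) -> mu.-integrable [set: R] (EFin \o g) ->
  mu.-integrable [set: R] (EFin \o (fun t => f t - g t)).
Proof.
move=> hf hg; have := integrableB measurableT hf hg.
by apply: eq_integrable => // t _ /=; rewrite EFinB.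
Qed.

Lemma intZ (R : realType) (k : R) (f : R -> R) :
  mu.-integrable [set: R] (EFin \o f) ->
  mu.-integrable [set: R] (EFin \o (fun t => k * f t)).
Proof.
move=> hf; have := integrableZl measurableT k hf.
by apply: eq_integrable => // t _ /=; rewrite EFinM.
Qed.

Lemma int_tphi (R : realType) (c s : R) : s != 0 ->
  mu.-integrable [set: R] (EFin \o (fun t => t * normal_pdf c s t)).
Proof.
move=> s0; apply: (@dom_int _ _ (fun t => expR (1 * t) * normal_pdf c s t +
   expR ((-1) * t) * normal_pdf c s t)).
- by mfun.
- move=> t; rewrite normrM (ger0_norm (normal_pdf_ge0 _ _ _)) -mulrDl.
  by rewrite ler_wpM2r ?normal_pdf_ge0 ?abs_le_exp.
- by apply: intD; apply: int_mgf.
Qed.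

Lemma int_phi (R : realType) (c s : R) :
  mu.-integrable [set: R] (EFin \o (fun t => normal_pdf c s t)).
Proof. exact: integrable_normal_pdf. Qed.

Lemma expR_sub1 (R : realType) (y : R) : expR y - 1 <= y * expR y.
Proof.
have := expR_ge1Dx (- y).
rewrite -(ler_pM2r (expR_gt0 y)) -expRD addNr expR0 mulrDl mul1r mulNr.
by rewrite lerBlDr => h; rewrite lerBlDl.
Qed.

Lemma ineq_mean (R : realType) (c s l : R) : s != 0 ->
  l * \int[mu]_t (t * normal_pdf c s t) - l * c <= expR (l ^+ 2 * (s ^+ 2 / 2)) - 1.
Proof.
move=> s0.
have H := @le_Rintegral _ _ _ mu setT
  (fun t => normal_pdf c s t + (l * (t * normal_pdf c s t) - (l * c) * normal_pdf c s t))
  (fun t => expR (- (l * c)) * (expR (l * t) * normal_pdf c s t)) measurableT.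
have i1 := int_phi c s.
have i2 := int_tphi c s0.
rewrite RintegralD // ?RintegralB // ?RintegralZl // ?Rint_npdf ?Rint_mgf // in H.
have j1 : mu.-integrable [set: R] (EFin \o (fun t => normal_pdf c s t +
       (l * (t * normal_pdf c s t) - l * c * normal_pdf c s t))).
  by apply: intD => //; apply: intB; apply: intZ.
have j2 : mu.-integrable [set: R] (EFin \o (fun t =>
       expR (- (l * c)) * (expR (l * t) * normal_pdf c s t))).
  by apply: intZ; apply: int_mgf.
have j3 : forall t : R, [set: R] t ->
  normal_pdf c s t + (l * (t * normal_pdf c s t) - l * c * normal_pdf c s t) <=
  expR (- (l * c)) * (expR (l * t) * normal_pdf c s t).
  move=> t _; rewrite [in leRHS]mulrA -expRD.
  have -> : normal_pdf c s t + (l * (t * normal_pdf c s t) - l * c * normal_pdf c s t)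
    = (1 + (- (l * c) + l * t)) * normal_pdf c s t by ring.
  by rewrite ler_wpM2r ?normal_pdf_ge0 // expR_ge1Dx.
move: (H j1 j2 j3).
rewrite -expRD (_ : - (l * c) + (l * c + l ^+ 2 * s ^+ 2 / 2) = l ^+ 2 * (s ^+ 2 / 2)); last by ring.
rewrite mulr1 => h; rewrite lerBrDl; exact: h.
- exact: int_mgf.
- exact: intZ.
- exact: intZ.
- by apply: intB; apply: intZ.
Qed.


Lemma zero_of_ineq (R : realType) (J K : R) : 0 <= K ->
  (forall l, l * J <= expR (l ^+ 2 * K) - 1) -> J = 0.
Proof.
move=> K0 H.
set C := K * expR K.
have C0 : 0 <= C by rewrite mulr_ge0 // expR_ge0.
have B : forall l, `|l| <= 1 -> l * J <= l ^+ 2 * C.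
  move=> l l1.
  have l21 : l ^+ 2 <= 1 by rewrite -real_normK ?num_real // expr_le1.
  apply: (le_trans (H l)); apply: (le_trans (expR_sub1 _)).
  rewrite /C mulrA.
  apply: ler_wpM2l; first by rewrite mulr_ge0 ?sqr_ge0.
  by rewrite ler_expR ler_piMl.
have A : forall l, 0 < l <= 1 -> `|J| <= l * C.
  move=> l /andP[l0 l1].
  have n1 : `|l| <= 1 by rewrite ger0_norm // ltW.
  have n2 : `|- l| <= 1 by rewrite normrN ger0_norm // ltW.
  rewrite ler_norml; apply/andP; split.
    have := B (- l) n2; rewrite sqrrN expr2 -mulrA mulNr -mulrN ler_pM2l //.
    by rewrite lerNl.
  by have := B l n1; rewrite expr2 -mulrA ler_pM2l.
apply/eqP; apply/negPn/negP => J0.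
have aJ : 0 < `|J| by rewrite normr_gt0.
have d0 : 0 < `|J| + C by rewrite (lt_le_trans aJ) // lerDl.
have := A (`|J| / (`|J| + C)).
rewrite divr_gt0 //= ler_pdivrMr // mul1r lerDl C0 => /(_ isT).
rewrite mulrAC ler_pdivlMr // mulrDr => h.
have : `|J| * `|J| <= 0.
  by rewrite -(lerD2r (`|J| * C)) add0r.
by rewrite leNgt mulr_gt0.
Qed.

Lemma Rint_tphi (R : realType) (c s : R) : s != 0 ->
  \int[mu]_t (t * normal_pdf c s t) = c.
Proof.
move=> s0; apply/eqP; rewrite -subr_eq0; apply/eqP.
apply: (@zero_of_ineq _ _ (s ^+ 2 / 2)).
  by rewrite divr_ge0 ?sqr_ge0.
by move=> l; rewrite mulrBr; exact: ineq_mean.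
Qed.

Lemma r_ge0 (R : realType) (b e x t : R) : e ^+ 2 = 1 -> 0 < b -> 0 <= 1 - wf b e x t.
Proof. by move=> e2 b0; have /andP[] := w_bound x t e2 b0. Qed.

Lemma r_le (R : realType) (b e x t : R) : e ^+ 2 = 1 -> 0 < b ->
  1 - wf b e x t <= expR (- (e *+ 2 / b) * x) * expR ((e *+ 2 / b) * t).
Proof. by move=> e2 b0; have /andP[] := w_bound x t e2 b0. Qed.

Lemma r_le1 (R : realType) (b e x t : R) : 1 - wf b e x t <= 1.
Proof. by rewrite lerBlDr lerDl /wf expR_ge0. Qed.

Lemma mes_r (R : realType) (b e x : R) : measurable_fun [set: R] (fun t => 1 - wf b e x t).
Proof. rewrite /wf; mfun. Qed.

Lemma int_phir (R : realType) (c s b e x : R) : e ^+ 2 = 1 -> 0 < b ->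
  mu.-integrable [set: R] (EFin \o (fun t => normal_pdf c s t * (1 - wf b e x t))).
Proof.
move=> e2 b0; apply: (@dom_int _ _ (fun t => normal_pdf c s t)).
- by apply: measurable_realfun.measurable_funM; [exact: measurable_normal_pdf|exact: mes_r].
- move=> t; rewrite normrM (ger0_norm (normal_pdf_ge0 _ _ _)) (ger0_norm (r_ge0 _ _ e2 b0)).
  by rewrite ler_piMr ?normal_pdf_ge0 ?r_le1.
- exact: int_phi.
Qed.

Lemma int_tphir (R : realType) (c s b e x : R) : s != 0 -> e ^+ 2 = 1 -> 0 < b ->
  mu.-integrable [set: R] (EFin \o (fun t => t * normal_pdf c s t * (1 - wf b e x t))).
Proof.
move=> s0 e2 b0; apply: (@dom_int _ _ (fun t => `|t * normal_pdf c s t|)).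
- apply: measurable_realfun.measurable_funM; last exact: mes_r.
  by apply: measurable_realfun.measurable_funM; [exact: measurable_id|exact: measurable_normal_pdf].
- move=> t; rewrite normrM (ger0_norm (r_ge0 _ _ e2 b0)).
  by rewrite ler_piMr ?normr_ge0 ?r_le1.
- have := integrable_abse (int_tphi c s0).
  by apply: eq_integrable => // t _.
Qed.

Lemma N_eq (R : realType) (m s b e x : R) : s != 0 -> e ^+ 2 = 1 -> 0 < b ->
  \int[mu]_t (normal_pdf m s t * laplace_pdf 0 b (x - t)) =
  Af m s b e x * (1 - \int[mu]_t (normal_pdf (m + e * s ^+ 2 / b) s t * (1 - wf b e x t))).
Proof.
move=> s0 e2 b0.
rewrite (@eq_Rintegral _ _ _ mu _ (fun t => Af m s b e x *
   (normal_pdf (m + e * s ^+ 2 / b) s t - normal_pdf (m + e * s ^+ 2 / b) s t * (1 - wf b e x t)))).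
  rewrite RintegralZl //; last by apply: intB; [exact: int_phi|exact: int_phir].
  by rewrite RintegralB // ?Rint_npdf //; [exact: int_phi|exact: int_phir].
move=> t _; have b1 : b != 0 by rewrite gt_eqF. rewrite (P1 _ e) //; ring.
Qed.

Lemma M_eq (R : realType) (m s b e x : R) : s != 0 -> e ^+ 2 = 1 -> 0 < b ->
  \int[mu]_t (t * normal_pdf m s t * laplace_pdf 0 b (x - t)) =
  Af m s b e x * ((m + e * s ^+ 2 / b) -
     \int[mu]_t (t * normal_pdf (m + e * s ^+ 2 / b) s t * (1 - wf b e x t))).
Proof.
move=> s0 e2 b0.
rewrite (@eq_Rintegral _ _ _ mu _ (fun t => Af m s b e x *
   (t * normal_pdf (m + e * s ^+ 2 / b) s t - t * normal_pdf (m + e * s ^+ 2 / b) s t * (1 - wf b e x t)))).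
  rewrite RintegralZl //; last by apply: intB; [exact: int_tphi|exact: int_tphir].
  by rewrite RintegralB // ?Rint_tphi //; [exact: int_tphi|exact: int_tphir].
move=> t _; have b1 : b != 0 by rewrite gt_eqF. rewrite -mulrA (P1 _ e) //; ring.
Qed.

Lemma PM_eq (R : realType) (m s b e x : R) : s != 0 -> e ^+ 2 = 1 -> 0 < b ->
  posterior_mean m s b x =
  ((m + e * s ^+ 2 / b) -
     \int[mu]_t (t * normal_pdf (m + e * s ^+ 2 / b) s t * (1 - wf b e x t))) /
  (1 - \int[mu]_t (normal_pdf (m + e * s ^+ 2 / b) s t * (1 - wf b e x t))).
Proof.
move=> s0 e2 b0; rewrite /posterior_mean (M_eq _ _ s0 e2 b0) (N_eq _ _ s0 e2 b0).
have A0 : Af m s b e x != 0.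
  by rewrite /Af mulf_neq0 ?expR_eq0 // invr_eq0 mulrn_eq0 /= gt_eqF.
by rewrite invfM mulrACA divff // mul1r.
Qed.

Lemma int_abs (R : realType) (f : R -> R) : mu.-integrable [set: R] (EFin \o f) ->
  mu.-integrable [set: R] (EFin \o (fun t => `|f t|)).
Proof. by move=> h; have := integrable_abse h; apply: eq_integrable. Qed.

Lemma B0 (R : realType) (c s b e x : R) : s != 0 -> e ^+ 2 = 1 -> 0 < b ->
  `|\int[mu]_t (normal_pdf c s t * (1 - wf b e x t))| <=
  expR (- (e *+ 2 / b) * x) * \int[mu]_t (expR ((e *+ 2 / b) * t) * normal_pdf c s t).
Proof.
move=> s0 e2 b0.
apply: (le_trans (le_normr_Rintegral measurableT (int_phir c s x e2 b0))).
rewrite -RintegralZl //; last exact: int_mgf.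
apply: le_Rintegral => //.
- by apply: int_abs; exact: int_phir.
- by apply: intZ; exact: int_mgf.
move=> t _; rewrite normrM (ger0_norm (normal_pdf_ge0 _ _ _)) (ger0_norm (r_ge0 _ _ e2 b0)).
rewrite mulrCA mulrA [X in _ <= X]mulrC.
apply: ler_wpM2l; [exact: normal_pdf_ge0|]; rewrite mulrC; exact: r_le.
Qed.

Lemma B1 (R : realType) (c s b e x : R) : s != 0 -> e ^+ 2 = 1 -> 0 < b ->
  `|\int[mu]_t (t * normal_pdf c s t * (1 - wf b e x t))| <=
  expR (- (e *+ 2 / b) * x) * \int[mu]_t
    (expR ((e *+ 2 / b + 1) * t) * normal_pdf c s t +
     expR ((e *+ 2 / b + -1) * t) * normal_pdf c s t).
Proof.
move=> s0 e2 b0.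
apply: (le_trans (le_normr_Rintegral measurableT (int_tphir c x s0 e2 b0))).
rewrite -RintegralZl //; last by apply: intD; exact: int_mgf.
apply: le_Rintegral => //.
- by apply: int_abs; exact: int_tphir.
- by apply: intZ; apply: intD; exact: int_mgf.
move=> t _; rewrite normrM (ger0_norm (r_ge0 _ _ e2 b0)) normrM.
rewrite (ger0_norm (normal_pdf_ge0 _ _ _)).
have -> : expR ((e *+ 2 / b + 1) * t) * normal_pdf c s t +
     expR ((e *+ 2 / b + -1) * t) * normal_pdf c s t =
     (expR (1 * t) + expR ((-1) * t)) * normal_pdf c s t * expR ((e *+ 2 / b) * t).
  rewrite !mulrDl !expRD; ring.
rewrite (_ : expR (- (e *+ 2 / b) * x) * ((expR (1 * t) + expR (-1 * t)) * normal_pdf c s t *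
   expR (e *+ 2 / b * t)) = ((expR (1 * t) + expR (-1 * t)) * normal_pdf c s t) *
   (expR (- (e *+ 2 / b) * x) * expR (e *+ 2 / b * t))); last by ring.
apply: ler_pM.
- by rewrite mulr_ge0 ?normal_pdf_ge0.
- exact: r_ge0.
- by apply: ler_wpM2r; [exact: normal_pdf_ge0|exact: abs_le_exp].
- exact: r_le.
Qed.

Lemma cvg_expM (R : realType) (k : R) : 0 < k -> expR (- (y * k)) @[y --> +oo] --> 0.
Proof.
move=> k0.
apply: (cvg_comp (fun y => y * k) (fun x => expR (- x))); last exact: cvgr_expR.
by apply: gt0_cvgMly => //; exact: cvg_id.
Qed.

Lemma squeeze0 (R : realType) (f K : R -> R) : (forall y, `|f y| <= K y) ->
  K y @[y --> +oo] --> 0 -> f y @[y --> +oo] --> 0.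
Proof.
move=> fK K0.
apply: (squeeze_cvgr (f := fun y => - K y) (h := K)).
- by apply: nearW => y; rewrite -ler_norml.
- by rewrite -oppr0; apply: cvgN.
- exact: K0.
Qed.

Lemma lim_e (R : realType) (m s b e : R) : 0 < s -> 0 < b -> e ^+ 2 = 1 ->
  posterior_mean m s b (e * y) @[y --> +oo] --> m + e * s ^+ 2 / b.
Proof.
move=> s0 b0 e2.
have s1 : s != 0 by rewrite gt_eqF.
set c := m + e * s ^+ 2 / b.
set R0 := fun y => \int[mu]_t (normal_pdf c s t * (1 - wf b e (e * y) t)).
set R1 := fun y => \int[mu]_t (t * normal_pdf c s t * (1 - wf b e (e * y) t)).
have ex : forall y, - (e *+ 2 / b) * (e * y) = - (y * (2 / b)).
  move=> y; rewrite -[e *+ 2]mulr_natr.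
  rewrite (_ : - (e * 2 / b) * (e * y) = - (e ^+ 2 * y * (2 / b))); last by ring.
  by rewrite e2 mul1r.
have b2 : 0 < 2 / b by rewrite divr_gt0.
have H0 : R0 y @[y --> +oo] --> 0.
  apply: (squeeze0 (K := fun y => expR (- (y * (2 / b))) *
    \int[mu]_t (expR ((e *+ 2 / b) * t) * normal_pdf c s t))).
    by move=> y; rewrite -ex; exact: B0.
  rewrite -(mul0r (\int[mu]_t (expR ((e *+ 2 / b) * t) * normal_pdf c s t))).
  by apply: cvgMl; exact: cvg_expM.
have H1 : R1 y @[y --> +oo] --> 0.
  apply: (squeeze0 (K := fun y => expR (- (y * (2 / b))) * \int[mu]_t
    (expR ((e *+ 2 / b + 1) * t) * normal_pdf c s t +
     expR ((e *+ 2 / b + -1) * t) * normal_pdf c s t))).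
    by move=> y; rewrite -ex; exact: B1.
  rewrite -(mul0r (\int[mu]_t
    (expR ((e *+ 2 / b + 1) * t) * normal_pdf c s t +
     expR ((e *+ 2 / b + -1) * t) * normal_pdf c s t))).
  by apply: cvgMl; exact: cvg_expM.
have -> : (fun y => posterior_mean m s b (e * y)) = (fun y => (c - R1 y) / (1 - R0 y)).
  by apply/funext => y; rewrite (PM_eq _ _ s1 e2 b0).
have hA : (fun y => c - R1 y) y @[y --> +oo] --> c - 0.
  by apply: cvgB => //; exact: cvg_cst.
have hB : (fun y => 1 - R0 y) y @[y --> +oo] --> (1:R) - 0.
  by apply: cvgB => //; exact: cvg_cst.
have nz : (1:R) - 0 != 0 by rewrite subr0 oner_neq0.
have := cvgM hA (cvgV nz hB); rewrite !subr0 invr1 mulr1 => h.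
exact: h.
Qed.

Unset Implicit Arguments.
Set Strict Implicit.

Theorem mainTheorem16 (R : realType) (sigma0 sigmae theta0 : R) :
  0 < sigma0 -> 0 < sigmae ->
  (posterior_mean theta0 sigma0 sigmae x - theta0 @[x --> +oo]
     --> sigma0 ^+ 2 / sigmae) /\
  (posterior_mean theta0 sigma0 sigmae x - theta0 @[x --> -oo]
     --> - (sigma0 ^+ 2 / sigmae)).
Proof.
move=> s0 b0; split.
- have H := @lim_e R theta0 sigma0 sigmae 1 s0 b0 (expr1n _ 2).
  rewrite (eq_cvg _ _ (g := posterior_mean theta0 sigma0 sigmae)) in H; last first.
    by move=> y; rewrite mul1r.
  have H2 : posterior_mean theta0 sigma0 sigmae x - theta0 @[x --> +oo] -->
     theta0 + 1 * sigma0 ^+ 2 / sigmae - theta0.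
    by apply: cvgB => //; exact: cvg_cst.
  by rewrite mul1r addrAC subrr add0r in H2.
- have e2 : (-1 : R) ^+ 2 = 1 by rewrite sqrrN expr1n.
  have H := @lim_e R theta0 sigma0 sigmae (-1) s0 b0 e2.
  apply/cvgNy_compNP.
  have H2 : posterior_mean theta0 sigma0 sigmae (-1 * x) - theta0 @[x --> +oo] -->
     theta0 + -1 * sigma0 ^+ 2 / sigmae - theta0.
    by apply: cvgB => //; exact: cvg_cst.
  rewrite mulN1r addrAC subrr add0r mulNr in H2.
  rewrite (eq_cvg _ _ (g := fun x => posterior_mean theta0 sigma0 sigmae (-1 * x) - theta0)) //.
  by move=> y /=; rewrite mulN1r.
Qed.
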